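(* Let $\alpha,\beta,m,u$ be positive integers with $\alpha=2^u\beta$, $\beta$ odd and $\gcd(\alpha,m)=1$. Let $G := C_m\rtimes C_\alpha$, where $C_m=\langle a\rangle$, $C_\alpha=\langle x\rangle$ and $x^{-1}ax=a^{-1}$. Then the number of cyclic subgroups of $G$ equals $d(|G|)+d(\beta)\,(m-d(m))$.
   Context: $C_k$ denotes the cyclic group of order $k$; $d(k)$ denotes the number of positive divisors of $k$. *)

(* Defs.v *)
From mathcomp Require Import all_boot all_fingroup all_solvable.
Set Implicit Arguments. Unset Strict Implicit. Unset Printing Implicit Defensive.

Definition ndivisors (k : nat) : nat := size (divisors k).

Definition num_cyclic_subgroups (gT : finGroupType) (G : {set gT}) : nat :=
  #|[set H : {group gT} | (H \subset G) && cyclic H]|.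

(* Main.v *)
Require Import Defs.
From mathcomp Require Import all_boot all_fingroup all_solvable.
From mathcomp Require Import zify.

Lemma ndiv_mul p q : 0 < p -> 0 < q -> coprime p q ->
  ndivisors (p * q) = ndivisors p * ndivisors q.
Proof.
move=> p0 q0 cpq; rewrite /ndivisors -(size_allpairs muln).
apply: perm_size; apply: uniq_perm.
- exact: divisors_uniq.
- apply: allpairs_uniq; try exact: divisors_uniq.
  move=> [d1 d2] [d1' d2'] /allpairsP[[y1 y2] [/= Hy1 Hy2 [-> ->]]].
  move=> /allpairsP[[z1 z2] [/= Hz1 Hz2 [-> ->]]] /= E.
  rewrite -!dvdn_divisors // in Hy1 Hy2 Hz1 Hz2.
  have c12 : forall u v, u %| p -> v %| q -> coprime u v.
    by move=> u v up vq; apply: (coprime_dvdl up); apply: (coprime_dvdr vq).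
  have e1 : y1 = z1.
    apply/eqP; rewrite eqn_dvd.
    rewrite -(Gauss_dvdl _ (c12 _ _ Hy1 Hz2)) -E dvdn_mulr //=.
    by rewrite -(Gauss_dvdl _ (c12 _ _ Hz1 Hy2)) E dvdn_mulr.
  subst z1; congr (_, _); apply/eqP; rewrite -(eqn_pmul2l (dvdn_gt0 p0 Hy1)).
  by rewrite E.
- move=> d; rewrite -dvdn_divisors ?muln_gt0 ?p0 //.
  apply/idP/allpairsP => [dpq | [[d1 d2] [/= H1 H2 ->]]]; last first.
    rewrite -dvdn_divisors // in H1; rewrite -dvdn_divisors // in H2.
    exact: dvdn_mul.
  exists (gcdn d p, gcdn d q); split => /=; rewrite -?dvdn_divisors ?dvdn_gcdr //.
  have d0 : 0 < d by apply: dvdn_gt0 dpq; rewrite muln_gt0 p0.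
  apply/eqP; rewrite eqn_dvd; apply/andP; split.
    by rewrite muln_gcdl !muln_gcdr !dvdn_gcd dpq !(dvdn_mulr _ (dvdnn d)) !(dvdn_mull _ (dvdnn d)).
  rewrite Gauss_dvd ?dvdn_gcdl //.
  apply: (coprime_dvdl (dvdn_gcdr _ _)); exact: (coprime_dvdr (dvdn_gcdr _ _)).
Qed.

Lemma ndiv_2exp k : ndivisors (2 ^ k) = k.+1.
Proof.
rewrite /ndivisors -[RHS](size_iota 0 k.+1) -(size_map (expn 2) (iota 0 k.+1)).
apply: perm_size; apply: uniq_perm.
- exact: divisors_uniq.
- rewrite map_inj_uniq ?iota_uniq //; move=> i j /eqP; rewrite eqn_exp2l //.
  by move/eqP.
- move=> d; rewrite -dvdn_divisors ?expn_gt0 //.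
  have P := @dvdn_pfactor 2 d k isT.
  apply/P/mapP => [[i ik ->] | [i]]; first by exists i; rewrite // mem_iota.
  by rewrite mem_iota add0n => /andP[_ ik] ->; exists i.
Qed.

Lemma ndiv_le m : 0 < m -> ndivisors m <= m.
Proof.
move=> m0; rewrite /ndivisors -[X in _ <= X](size_iota 1 m).
apply: uniq_leq_size; first exact: divisors_uniq.
move=> d; rewrite -dvdn_divisors // mem_iota => dm.
by rewrite (dvdn_gt0 m0 dm) /= add1n ltnS dvdn_leq.
Qed.

Section Grp.
Local Open Scope group_scope.
Set Implicit Arguments.
Variables (gT : finGroupType) (a x : gT).
Hypothesis hax : a ^ x = a^-1.

Lemma conj_ax n : a ^ (x ^+ n) = if odd n then a^-1 else a.
Proof.
elim: n => [|n IH]; first by rewrite expg0 conjg1.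
rewrite expgSr conjgM IH /=; case: (odd n) => /=; last by [].
by rewrite conjVg hax invgK.
Qed.

Lemma comm_rule c n : c \in <[a]> ->
  c * x ^+ n = x ^+ n * (if odd n then c^-1 else c).
Proof.
case/cycleP=> i ->; rewrite conjgC conjXg conj_ax.
by case: (odd n); rewrite // expVgn.
Qed.

Lemma comm_rule2 c n : c \in <[a]> ->
  x ^+ n * c = (if odd n then c^-1 else c) * x ^+ n.
Proof.
move=> ca; set c' := (if odd n then c^-1 else c).
have c'a : c' \in <[a]> by rewrite /c'; case: (odd n); rewrite ?groupV.
rewrite (comm_rule n c'a) /c'; case: (odd n); by rewrite ?invgK.
Qed.

Lemma pow_rule i j k : odd j ->
  (a ^+ i * x ^+ j) ^+ k = a ^+ (i * odd k) * x ^+ (j * k).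
Proof.
move=> oj; elim: k => [|k IH]; first by rewrite /= !muln0 !expg0 mulg1.
rewrite expgSr IH !mulgA -[_ * _ * a ^+ i]mulgA (comm_rule2 _ (mem_cycle a i)).
rewrite oddM oj /=; case ok: (odd k) => /=.
  by rewrite muln1 mulgA mulgV mul1g muln0 expg0 mul1g -expgD mulnS addnC.
by rewrite muln0 expg0 mul1g muln1 -!mulgA -expgD mulnS addnC.
Qed.


Hypothesis tI : <[a]> :&: <[x]> = 1.
Hypothesis evx : ~~ odd #[x].

Lemma decomp i j i' j' : a ^+ i * x ^+ j = a ^+ i' * x ^+ j' ->
  a ^+ i = a ^+ i' /\ x ^+ j = x ^+ j'.
Proof.
move=> E.
have h : (a ^+ i')^-1 * a ^+ i = x ^+ j' * (x ^+ j)^-1.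
  by rewrite -{1}(mulgK (x ^+ j) (a ^+ i)) E -!mulgA mulKg.
have : (a ^+ i')^-1 * a ^+ i \in <[a]> :&: <[x]>.
  by rewrite inE groupM ?groupV ?mem_cycle //= h groupM ?groupV ?mem_cycle.
rewrite tI => /set1P e1.
have Ea : a ^+ i = a ^+ i' by rewrite -(mulKVg (a ^+ i') (a ^+ i)) e1 mulg1.
by split => //; move: E; rewrite Ea => /mulgI.
Qed.
Arguments decomp {i j i' j'}.

Lemma parity j j' : x ^+ j = x ^+ j' -> odd j = odd j'.
Proof.
move/eqP; rewrite eq_expg_mod_order => /eqP E.
by rewrite -(odd_mod j (negbTE evx)) E odd_mod // (negbTE evx).
Qed.
Arguments parity {j j'}.

Lemma memf i e i' e' : odd e ->  odd e' ->
  a ^+ i * x ^+ e \in <[a ^+ i' * x ^+ e']> ->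
  a ^+ i = a ^+ i' /\ x ^+ e \in <[x ^+ e']>.
Proof.
move=> oe oe' /cycleP[k]; rewrite pow_rule // => E.
case: (decomp E) => Ea Ex.
have ok : odd k by move: (parity Ex); rewrite oddM oe oe'.
by rewrite ok muln1 in Ea; split => //; rewrite Ex expgM mem_cycle.
Qed.
Arguments memf {i e i' e'}.

Definition fg e i : {group gT} := <[a ^+ i * x ^+ e]>%G.

Lemma fg_inj e i e' i' : odd e -> odd e' -> e %| #[x] -> e' %| #[x] ->
  i < #[a] -> i' < #[a] -> fg e i = fg e' i' -> e = e' /\ i = i'.
Proof.
move=> oe oe' de de' ia ia' E.
have h1 : a ^+ i * x ^+ e \in <[a ^+ i' * x ^+ e']>.
  by have := cycle_id (a ^+ i * x ^+ e); rewrite -[<[_]>]/(gval (fg e i)) E.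
have h2 : a ^+ i' * x ^+ e' \in <[a ^+ i * x ^+ e]>.
  by have := cycle_id (a ^+ i' * x ^+ e'); rewrite -[<[_]>]/(gval (fg e' i')) -E.
case: (memf oe oe' h1) => Ea X1; case: (memf oe' oe h2) => _ X2.
split; last first.
  by apply/eqP; move/eqP: Ea; rewrite eq_expg_mod_order !modn_small.
have Ex : <[x ^+ e]> = <[x ^+ e']>.
  by apply/eqP; rewrite eqEsubset !cycle_subG X1 X2.
have : #[x ^+ e] = #[x ^+ e'] by rewrite /order Ex.
rewrite !orderXdiv // => Eq.
have q0 : 0 < #[x] %/ e.
  by rewrite divn_gt0 ?(dvdn_gt0 (order_gt0 x)) // dvdn_leq.
by apply/eqP; rewrite -(eqn_pmul2l q0) {2}Eq !divnK.
Qed.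

Lemma fg_gen i j : odd j ->
  <[a ^+ i * x ^+ j]> = <[a ^+ i * x ^+ (gcdn #[x] j)]>.
Proof.
move=> oj; set e := gcdn #[x] j.
have oe : odd e.
  rewrite -[odd e]negbK -dvdn2; apply/negP => /dvdn_trans/(_ (dvdn_gcdr _ _)).
  by rewrite dvdn2 oj.
have de : e %| j by apply: dvdn_gcdr.
apply/eqP; rewrite eqEsubset !cycle_subG; apply/andP; split.
  apply/cycleP; exists (j %/ e); rewrite pow_rule //.
  have ok : odd (j %/ e).
    by move: oj; rewrite -{1}(divnK de) oddM => /andP[].
  by rewrite ok muln1 mulnC divnK.
have Ex : <[x ^+ j]> = <[x ^+ e]>.
  apply/eqP; rewrite (eq_subG_cyclic (cycle_cyclic x)) ?cycleX //.
  by rewrite -!orderE orderXgcd orderXdiv ?dvdn_gcdl.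
have : x ^+ e \in <[x ^+ j]> by rewrite Ex cycle_id.
case/cycleP=> k; rewrite -expgM => Ek.
have ok : odd k by move: (parity Ek); rewrite oddM oj oe.
by apply/cycleP; exists k; rewrite pow_rule // ok muln1 Ek.
Qed.


Hypothesis cax : coprime #[a] #[x].

Lemma comm_ax2 : commute a (x ^+ 2).
Proof. by rewrite /commute (comm_rule 2 (cycle_id a)). Qed.

Lemma ox2 : #[x ^+ 2] = #[x] %/ 2.
Proof. by rewrite orderXdiv // dvdn2. Qed.

Lemma cax2 : coprime #[a] #[x ^+ 2].
Proof. by rewrite ox2; apply: (coprime_dvdr _ cax); apply: dvdn_div; rewrite dvdn2. Qed.

Lemma N_eq : <[a * x ^+ 2]> = <[a]> * <[x ^+ 2]>.
Proof. exact: cycleM comm_ax2 cax2. Qed.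

Lemma card_N : #[a * x ^+ 2] = (#[a] * (#[x] %/ 2))%N.
Proof. by rewrite (orderM comm_ax2 cax2) ox2. Qed.

Lemma memN_even i j : ~~ odd j -> a ^+ i * x ^+ j \in <[a * x ^+ 2]>.
Proof.
move=> ej; rewrite N_eq; apply: mem_mulg; first exact: mem_cycle.
rewrite -(odd_double_half j) (negbTE ej) add0n -muln2 mulnC expgM.
exact: mem_cycle.
Qed.

Lemma notN_odd i j : odd j -> a ^+ i * x ^+ j \notin <[a * x ^+ 2]>.
Proof.
move=> oj; rewrite N_eq; apply/negP => /mulsgP[y z /cycleP[k ->] /cycleP[l ->]].
rewrite -expgM => /decomp[_ /parity]; rewrite oddM oj.
by [].
Qed.

End Grp.
Open Scope group_scope.

Lemma cyc_count (gT : finGroupType) (g : gT) :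
  #|[set H : {group gT} | H \subset <[g]>]| = ndivisors #[g].
Proof.
set P := [set H : {group gT} | H \subset <[g]>].
rewrite cardE /ndivisors -(size_map (fun H : {group gT} => #|H|)).
apply: perm_size; apply: uniq_perm.
- rewrite map_inj_in_uniq ?enum_uniq //.
  move=> H K; rewrite !mem_enum !inE => sH sK eHK; apply: val_inj => /=.
  by apply/eqP; rewrite (eq_subG_cyclic (cycle_cyclic g)) // eHK.
- exact: divisors_uniq.
- move=> d; rewrite -dvdn_divisors ?order_gt0 //.
  apply/mapP/idP => [[H] | dd].
    by rewrite mem_enum inE => sH ->; apply: cardSg.
  have := cycle_sub_group dd; set H0 := <[g ^+ _]>%G => E.
  have : H0 \in [set H : {group gT} | H \subset <[g]> & #|H| == d].
    by rewrite E set11.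
  by rewrite inE => /andP[sH /eqP cH]; exists H0; rewrite ?mem_enum ?inE.
Qed.

Close Scope group_scope.

Lemma odd_dvd e n : e %| n -> odd n -> odd e.
Proof.
move=> en on; rewrite -[odd e]negbK -dvdn2; apply/negP => /dvdn_trans/(_ en).
by rewrite dvdn2 on.
Qed.

Lemma arith m beta k : 0 < m -> 0 < beta -> coprime m (2 ^ k * beta) -> odd beta ->
  ndivisors (m * (2 ^ k * beta)) = ndivisors m * (k.+1 * ndivisors beta).
Proof.
move=> m0 b0 c ob.
rewrite ndiv_mul ?muln_gt0 ?expn_gt0 ?m0 ?b0 // ndiv_mul ?expn_gt0 ?b0 //.
  by rewrite ndiv_2exp.
by apply: coprimeXl; rewrite coprime2n.
Qed.

Theorem proposition5p1 (alpha beta m u : nat) (gT : finGroupType)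
    (G : {group gT}) (a x : gT) :
  0 < alpha -> 0 < beta -> 0 < m -> 0 < u ->
  alpha = 2 ^ u * beta -> odd beta -> coprime alpha m ->
  #[a]%g = m -> #[x]%g = alpha ->
  (<[a]> ><| <[x]>)%g = G ->
  (a ^ x = a^-1)%g ->
  num_cyclic_subgroups G = ndivisors #|G| + ndivisors beta * (m - ndivisors m).
Proof.
Open Scope group_scope.
move=> al0 b0 m0 u0 Eal ob cam Ha Hx sd hax.
have cardG : #|G| = (m * alpha)%N by rewrite -(sdprod_card sd) -!orderE Ha Hx.
case/sdprodP: sd => _ defG _ tI.
have evx : ~~ odd #[x] by rewrite Hx Eal oddM oddX orbF; case: eqP u0 => // ->.
have cax : coprime #[a] #[x] by rewrite Ha Hx coprime_sym.
have aG : a \in G by rewrite -defG; apply/mulsgP; exists a 1; rewrite ?cycle_id ?group1 ?mulg1.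
have xG : x \in G by rewrite -defG; apply/mulsgP; exists 1 x; rewrite ?cycle_id ?group1 ?mul1g.
have sNG : <[a * x ^+ 2]> \subset G by rewrite cycle_subG groupM ?groupX.
set S := [set H : {group gT} | (H \subset G) && cyclic H].
set P := [set H : {group gT} | H \subset <[a * x ^+ 2]>].
rewrite /num_cyclic_subgroups -/S -(cardsID P S).
have SP : S :&: P = P.
  apply/setP => H; rewrite !inE; apply/andP/idP => [[] // | sH].
  split=> //; rewrite (subset_trans sH sNG) /=.
  exact: cyclicS sH (cycle_cyclic _).
have oddd e : e \in divisors beta -> odd e /\ e %| #[x].
  rewrite -dvdn_divisors // => eb; split; first exact: odd_dvd eb ob.
  by rewrite Hx Eal dvdn_mull.
have cS2 : #|S :\: P| = (ndivisors beta * m)%N.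
  rewrite cardE /ndivisors -[in RHS](size_iota 0 m).
  rewrite -(size_allpairs (fun e i => fg gT a x e i)).
  apply: perm_size; apply: uniq_perm; first exact: enum_uniq.
    apply: allpairs_uniq; [exact: divisors_uniq | exact: iota_uniq |].
    move=> [e i] [e' i'] /allpairsP[[y1 y2] [/= Hy1 Hy2 [-> ->]]].
    move=> /allpairsP[[z1 z2] [/= Hz1 Hz2 [-> ->]]] /= E.
    case: (oddd _ Hy1) => o1 d1; case: (oddd _ Hz1) => o2 d2.
    rewrite mem_iota add0n in Hy2; rewrite mem_iota add0n in Hz2.
    case/andP: Hy2 => _ Hy2; case/andP: Hz2 => _ Hz2.
    rewrite -Ha in Hy2 Hz2.
    by have [-> ->] := fg_inj hax tI evx o1 o2 d1 d2 Hy2 Hz2 E.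
  move=> H; rewrite mem_enum !inE; apply/idP/allpairsP.
    case/andP=> nHN /andP[sHG /cyclicP[g Hg]].
    have gG : g \in G by rewrite -cycle_subG -Hg.
    move: gG; rewrite -defG => /mulsgP[y z /cycleP[i0 ->] /cycleP[j ->] Eg].
    have oj : odd j.
      apply: contraR nHN => ej; rewrite Hg cycle_subG Eg.
      exact: (@memN_even _ _ _ hax evx cax).
    exists (gcdn #[x] j, i0 %% m); split => /=.
    - rewrite -dvdn_divisors //.
      have : gcdn #[x] j %| (2 ^ u * beta)%N by rewrite -Eal -Hx dvdn_gcdl.
      rewrite Gauss_dvdr //; apply: coprimeXr; rewrite coprimen2.
      exact: odd_dvd (dvdn_gcdr _ _) oj.
    - by rewrite mem_iota add0n ltn_pmod.
    - apply: val_inj => /=; rewrite Hg Eg [LHS](@fg_gen _ _ _ hax evx _ _ oj).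
      by rewrite -Ha expg_mod_order.
  case=> [[e i] [/= He Hi ->]].
  case: (oddd _ He) => oe de.
  apply/and3P; split; last exact: cycle_cyclic.
    by rewrite cycle_subG; exact: (notN_odd hax tI evx cax).
  by rewrite cycle_subG groupM ?groupX.
rewrite SP cS2 cyc_count (@card_N _ _ _ hax evx cax) Ha Hx cardG.
case: u u0 Eal => // k _ Eal.
have Eh : (alpha %/ 2 = 2 ^ k * beta)%N by rewrite Eal expnS -mulnA mulKn.
have cm1 : coprime m (2 ^ k * beta).
  rewrite coprime_sym; apply: (coprime_dvdl _ cam).
  by rewrite Eal expnS -mulnA dvdn_mull.
have cm2 : coprime m (2 ^ k.+1 * beta) by rewrite -Eal coprime_sym.
rewrite Eh arith // Eal arith //.
have := ndiv_le m m0; set D := ndivisors m; set B := ndivisors beta => Dm.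
nia.
Qed.
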